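(* Let $\mathcal P_n$ be the set of pairs $(\lambda,\mu)$ of partitions $\lambda=(\lambda_1\ge\dots\ge\lambda_s>0)$, $\mu=(\mu_1\ge\dots\ge\mu_r>0)$ with $|\lambda|+|\mu|=n$ and $r$ even (these parametrize conjugacy classes of the Weyl group of $so_{2n}$). Define $\Phi(\lambda,\mu)$ to be the partition of $2n$ with parts $\lambda_1,\lambda_1,\lambda_2,\lambda_2,\dots,\lambda_s,\lambda_s$, $2\mu_1+1,\dots,2\mu_{r/2}+1$, $2\mu_{r/2+1}-1,\dots,2\mu_r-1$. Then $\Phi$ maps $\mathcal P_n$ onto the set of partitions of $2n$ in which every even part occurs with even multiplicity, and the restriction of $\Phi$ to the pairs with $\lambda=\emptyset$ is injective. *)

(* Defs.v *)
From mathcomp Require Import all_boot.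
Set Implicit Arguments. Unset Strict Implicit. Unset Printing Implicit Defensive.

Definition is_partition (s : seq nat) : bool :=
  sorted geq s && all (fun x => 0 < x) s.

Definition inP (n : nat) (lam mu : seq nat) : Prop :=
  [/\ is_partition lam, is_partition mu, sumn lam + sumn mu = n
    & ~~ odd (size mu)].

Definition Phi (lam mu : seq nat) : seq nat :=
  let h := (size mu)./2 in
  sort geq (flatten [seq [:: x; x] | x <- lam]
            ++ [seq (2 * x).+1 | x <- take h mu]
            ++ [seq (2 * x).-1 | x <- drop h mu]).

Definition evenmult_partition (m : nat) (p : seq nat) : Prop :=
  [/\ is_partition p, sumn p = m
    & forall k, ~~ odd k -> ~~ odd (count_mem k p)].

(* Main.v *)
Require Import Defs.
From mathcomp Require Import all_boot.
From mathcomp Require Import zify.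
Set Implicit Arguments. Unset Strict Implicit. Unset Printing Implicit Defensive.

Definition dbl (s : seq nat) := flatten [seq [:: x; x] | x <- s].

Lemma geq_trans' : transitive geq. Proof. move=> x y z /= ? ?; lia. Qed.
Lemma geq_total' : total geq. Proof. move=> x y /=; exact: leq_total. Qed.
Lemma geq_anti : antisymmetric geq.
Proof. move=> x y /andP[] /= ? ?; lia. Qed.

Lemma count_dbl k s : count_mem k (dbl s) = 2 * count_mem k s.
Proof. elim: s => //= x s IH; rewrite /dbl /= in IH *; rewrite IH; lia. Qed.

Lemma sumn_dbl s : sumn (dbl s) = 2 * sumn s.
Proof. elim: s => //= x s IH; rewrite /dbl /= in IH *; rewrite IH; lia. Qed.

Lemma mem_dbl x s : (x \in dbl s) = (x \in s).
Proof. elim: s => //= y s IH; rewrite /dbl /= in IH *; rewrite !inE IH; case: (x == y) => //. Qed.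

Lemma sumn_mapS s : sumn [seq (2*x).+1 | x <- s] = 2 * sumn s + size s.
Proof. elim: s => //= x s IH; rewrite IH; lia. Qed.

Lemma sumn_mapP s : all (fun x => 0 < x) s ->
  sumn [seq (2*x).-1 | x <- s] + size s = 2 * sumn s.
Proof. elim: s => //= x s IH /andP[h1 h2]; have := IH h2; lia. Qed.

Lemma odd_sumn s : all odd s -> odd (sumn s) = odd (size s).
Proof. elim: s => //= x s IH /andP[h1 h2]; rewrite oddD IH // h1 /=; by case: (odd (size s)). Qed.

Lemma memE (x : nat) s : (x \in s) = (0 < count_mem x s).
Proof. by rewrite -has_pred1 has_count. Qed.

Lemma size_even r : ~~ odd r -> r = r./2 + r./2.
Proof. move=> h; have := odd_double_half r; rewrite (negbTE h); lia. Qed.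

Lemma sumPhi lam mu : all (fun x => 0 < x) mu -> ~~ odd (size mu) ->
  sumn (Phi lam mu) = 2 * (sumn lam + sumn mu).
Proof.
move=> Hp Hodd; rewrite /Phi (perm_sumn (permEl (perm_sort _ _))) !sumn_cat.
rewrite -/(dbl lam) sumn_dbl sumn_mapS.
set h := (size mu)./2.
have Hd : all (fun x => 0 < x) (drop h mu).
  by apply/allP => x /mem_drop hx; exact: (allP Hp).
have := sumn_mapP Hd.
have Hs := size_even Hodd.
rewrite size_takel ?size_drop; last by rewrite /h; lia.
have := f_equal sumn (cat_take_drop h mu); rewrite sumn_cat.
rewrite /h; lia.
Qed.

Lemma part1 n lam mu : inP n lam mu -> evenmult_partition (2 * n) (Phi lam mu).
Proof.
case=> /andP[Sl Pl] /andP[Sm Pm] Hs Hodd.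
set h := (size mu)./2.
have Hpd : forall x, x \in drop h mu -> 0 < x.
  by move=> x /mem_drop hx; exact: (allP Pm).
split.
- apply/andP; rewrite /Phi; split; first by apply: sort_sorted; exact: geq_total'.
  apply/allP => x; rewrite mem_sort !mem_cat -/(dbl lam) mem_dbl.
  case/or3P => [hx|/mapP[y _ ->]|/mapP[y hy ->]] //.
  + exact: (allP Pl).
  + have := Hpd _ hy; rewrite /=; lia.
- by rewrite sumPhi // -Hs.
- move=> k Hk.
  rewrite (permP (permEl (perm_sort _ _)) (pred1 k)) !count_cat -/(dbl lam).
  rewrite count_dbl !count_map.
  rewrite (eq_count (a1 := preim (fun x => (2*x).+1) (pred1 k)) (a2 := pred0)); last first.
    move=> y /=; apply/negbTE/eqP => E; move: Hk; rewrite -E => /negbTE hk.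
    have := modn2 ((2*y).+1); rewrite hk; lia.
  rewrite (eq_in_count (a1 := preim (fun x => (2*x).-1) (pred1 k)) (a2 := pred0)); last first.
    move=> y hy /=; apply/negbTE/eqP => E; move: Hk; rewrite -E => /negbTE hk.
    have := Hpd _ hy; have := modn2 ((2*y).-1); rewrite hk; lia.
  by rewrite !count_pred0 !addn0 oddM.
Qed.

Lemma Phi0E mu : sorted geq mu ->
  Phi [::] mu = [seq (2 * x).+1 | x <- take (size mu)./2 mu]
                ++ [seq (2 * x).-1 | x <- drop (size mu)./2 mu].
Proof.
move=> Sm; rewrite /Phi /=; apply: sorted_sort; first exact: geq_trans'.
set h := (size mu)./2.
move: Sm; rewrite !sorted_pairwise; try exact: geq_trans'.
rewrite -{1}(cat_take_drop h mu) !pairwise_cat => /and3P[Ha Ht Hd].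
apply/and3P; split.
- rewrite allrel_mapl allrel_mapr; apply/allrelP => x y hx hy /=.
  have := allrelP Ha x y hx hy; rewrite /=; lia.
- by rewrite pairwise_map; apply: sub_pairwise Ht => x y /=; lia.
- by rewrite pairwise_map; apply: sub_pairwise Hd => x y /=; lia.
Qed.

Lemma part3 n mu1 mu2 : inP n [::] mu1 -> inP n [::] mu2 ->
  Phi [::] mu1 = Phi [::] mu2 -> mu1 = mu2.
Proof.
case=> _ /andP[S1 _] _ _; case=> _ /andP[S2 _] _ _.
rewrite (Phi0E S1) (Phi0E S2) => E.
have szE : forall mu, size ([seq (2 * x).+1 | x <- take (size mu)./2 mu]
                ++ [seq (2 * x).-1 | x <- drop (size mu)./2 mu]) = size mu.
  by move=> mu; rewrite size_cat !size_map -size_cat cat_take_drop.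
have Hsz : size mu1 = size mu2 by rewrite -szE E szE.
have szT : forall mu, size [seq (2 * x).+1 | x <- take (size mu)./2 mu] = (size mu)./2.
  by move=> mu; rewrite size_map size_takel //; lia.
have E1 := f_equal (take (size mu1)./2) E.
have E2 := f_equal (drop (size mu1)./2) E.
rewrite take_size_cat ?szT // Hsz take_size_cat ?szT // in E1.
rewrite drop_size_cat ?szT // Hsz drop_size_cat ?szT // in E2.
have I1 : injective (fun x : nat => (2 * x).+1) by move=> x y /=; lia.
have I2 : injective (fun x : nat => (2 * x).-1) by move=> x y /=; lia.
move/(inj_map I1): E1 => E1; move/(inj_map I2): E2 => E2.
by rewrite -(cat_take_drop (size mu2)./2 mu1) E1 E2 cat_take_drop.
Qed.

Lemma sumn_nseq_uniq (u : seq nat) (f : nat -> nat) k : uniq u ->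
  sumn [seq count_mem k (nseq (f x) x) | x <- u] = (k \in u) * f k.
Proof.
elim: u => //= x u IH /andP[hx hu]; rewrite IH // count_nseq in_cons /=.
case: (eqVneq x k) => [<-|ne]; first by rewrite ?in_cons ?eqxx ?(negbTE hx) /= ?muln0 ?addn0.
by []. Qed.

Lemma part2 n p : evenmult_partition (2 * n) p ->
  exists lam mu, inP n lam mu /\ Phi lam mu = p.
Proof.
case=> /andP[Sp Pp] Hsum Hev.
set c := fun x => count_mem x p.
set lam0 := flatten [seq nseq (c x)./2 x | x <- undup p].
set E := [seq x <- undup p | odd (c x)].
set D := sort geq E.
set k := (size D)./2.
set lam := sort geq lam0.
set mu := [seq x./2 | x <- take k D] ++ [seq x.+1./2 | x <- drop k D].
have cl : forall x, count_mem x lam = (c x)./2.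
  move=> x; rewrite (permP (permEl (perm_sort _ _)) (pred1 x)) count_flatten -map_comp.
  rewrite (sumn_nseq_uniq (fun x => (c x)./2)) ?undup_uniq // mem_undup.
  case: (boolP (x \in p)) => hx; first by rewrite mul1n.
  suff -> : c x = 0 by [].
  by move: hx; rewrite memE /c; case: (count_mem x p).
have cD : forall x, count_mem x D = odd (c x).
  move=> x; rewrite (permP (permEl (perm_sort _ _)) (pred1 x)) count_filter.
  case: (boolP (odd (c x))) => ho.
    rewrite (eq_count (a2 := pred1 x)); last by move=> y /=; case: eqP => // ->; rewrite ho.
    rewrite count_uniq_mem ?undup_uniq // mem_undup memE -/(c x).
    by move: ho; case: (c x).
  rewrite (eq_count (a2 := pred0)) ?count_pred0 //.
  by move=> y /=; case: eqP => // ->; rewrite (negbTE ho).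
have Hperm : perm_eq (dbl lam ++ D) p.
  apply/allP => x _ /=; rewrite count_cat count_dbl cl cD -/(c x).
  by apply/eqP; have := odd_double_half (c x); lia.
have Dodd : forall x, x \in D -> odd x.
  move=> x; rewrite mem_sort mem_filter => /andP[ho _].
  by apply/negPn/negP => /Hev; rewrite -/(c x) ho.
have Dpos : forall x, x \in D -> 0 < x.
  move=> x; rewrite mem_sort mem_filter mem_undup => /andP[_ hx].
  exact: (allP Pp).
have Duniq : uniq D by rewrite sort_uniq filter_uniq ?undup_uniq.
have Dsz : ~~ odd (size D).
  have Hs := perm_sumn Hperm; rewrite sumn_cat sumn_dbl Hsum in Hs.
  have := f_equal odd Hs; rewrite oddD !oddM /= odd_sumn; last by apply/allP.
  by move=> ->.
have Dsort : pairwise [rel x y | y < x] D.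
  have S1 : pairwise geq D.
    by rewrite -sorted_pairwise; [apply: sort_sorted; exact: geq_total' | exact: geq_trans'].
  have S2 := Duniq; rewrite uniq_pairwise in S2.
  have := introT andP (conj S1 S2); rewrite -pairwise_relI.
  by apply: sub_pairwise => x y /= /andP[h1 h2]; rewrite ltn_neqAle eq_sym h2 h1.
have szD := size_even Dsz; rewrite -/k in szD.
have szT : size (take k D) = k by rewrite size_takel //; lia.
have szDr : size (drop k D) = k by rewrite size_drop; lia.
have szmu : size mu = k + k by rewrite size_cat !size_map szT szDr.
have hk : (size mu)./2 = k by rewrite szmu; lia.
have PhiE : Phi lam mu = p.
  rewrite /Phi hk -/(dbl lam) take_size_cat ?size_map // drop_size_cat ?size_map //.
  rewrite -!map_comp (map_id_in (s := take k D)); last first.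
    move=> x /mem_take /Dodd hx /=; have := modn2 x; rewrite hx; lia.
  rewrite (map_id_in (s := drop k D)); last first.
    move=> x /mem_drop /Dodd hx /=; have := modn2 x; rewrite hx; lia.
  rewrite cat_take_drop -[RHS](sorted_sort geq_trans' Sp).
  apply/perm_sortP; [exact: geq_total' | exact: geq_trans' | exact: geq_anti | ].
  exact: Hperm.
exists lam, mu; split => //.
have Hpmu : all (fun x => 0 < x) mu.
  apply/allP => x; rewrite mem_cat => /orP[] /mapP[y hy ->].
  - have : 0 < size (drop k D) by rewrite szDr -szT; case: (take k D) hy.
    case Hd: (drop k D) => [|z zs] // _.
    have hz : z \in drop k D by rewrite Hd mem_head.
    move: Dsort; rewrite -{1}(cat_take_drop k D) pairwise_cat => /and3P[Ha _ _].
    have := allrelP Ha y z hy hz; have := Dpos z (mem_drop hz); rewrite /=; lia.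
  - have := Dpos y (mem_drop hy); lia.
have Smu : sorted geq mu.
  rewrite sorted_pairwise; last exact: geq_trans'.
  move: Dsort; rewrite -{1}(cat_take_drop k D) !pairwise_cat => /and3P[Ha Ht Hd].
  apply/and3P; split.
  - rewrite allrel_mapl allrel_mapr; apply/allrelP => x y hx hy /=.
    have := allrelP Ha x y hx hy; rewrite /=.
    have := Dodd x (mem_take hx); have := Dodd y (mem_drop hy).
    move=> oy ox; have := modn2 x; have := modn2 y; rewrite ox oy; lia.
  - by rewrite pairwise_map; apply: sub_pairwise Ht => x y /=; lia.
  - by rewrite pairwise_map; apply: sub_pairwise Hd => x y /=; lia.
have Hmu_odd : ~~ odd (size mu) by rewrite szmu addnn odd_double.
split => //.
- apply/andP; split; first by apply: sort_sorted; exact: geq_total'.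
  apply/allP => x; rewrite memE (cl x) => hx; apply: (allP Pp).
  rewrite memE -/(c x); lia.
- by apply/andP.
- have := sumPhi lam Hpmu Hmu_odd; rewrite PhiE Hsum; lia.
Qed.

Theorem mainTheorem7 (n : nat) :
  (forall lam mu, inP n lam mu -> evenmult_partition (2 * n) (Phi lam mu)) /\
  (forall p, evenmult_partition (2 * n) p ->
     exists lam mu, inP n lam mu /\ Phi lam mu = p) /\
  (forall mu1 mu2, inP n [::] mu1 -> inP n [::] mu2 ->
     Phi [::] mu1 = Phi [::] mu2 -> mu1 = mu2).
Proof.
split; first exact: part1.
split; first exact: part2.
exact: part3.
Qed.
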